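(* Let $k\ge 2$ and $G=\Theta(2,2,2k)$ with end vertices $u$ and $v$. Let $m\ge 4$ and let $L$ be an $m$-assignment for $G$ with $L(u)\ne L(v)$. Then $P(G,L)\ge P(G,m)$.
   Context: $\Theta(l_1,l_2,l_3)$ denotes two end vertices joined by three internally disjoint paths of lengths $l_1,l_2,l_3$. An $m$-assignment $L$ assigns to each vertex $w$ a set $L(w)$ of $m$ colors; $P(G,L)$ is the number of proper colorings $f$ of $G$ with $f(w)\in L(w)$ for all $w$. $P(G,m)$ is the chromatic polynomial of $G$. *)

(* Defs.v *)
From mathcomp Require Import all_boot.
Set Implicit Arguments. Unset Strict Implicit. Unset Printing Implicit Defensive.

(* Theta(2,2,2k) on vertex set 'I_(2k+3) (written 'I_(k.*2).+3):
   0 = u, 1 = v (end vertices); 2 = middle of first length-2 path;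
   3 = middle of second length-2 path; 4, ..., 2k+2 = the 2k-1 internal
   vertices of the length-2k path u - 4 - 5 - ... - (2k+2) - v. *)
Definition theta_edge (k a b : nat) : bool :=
  [|| (a == 0) && (b == 2), (a == 2) && (b == 1),
      (a == 0) && (b == 3), (a == 3) && (b == 1),
      (a == 0) && (b == 4),
      [&& 4 <= a, b == a.+1 & b <= (k.*2).+2]
    | (a == (k.*2).+2) && (b == 1)].

Definition theta_adj (k : nat) : rel 'I_(k.*2).+3 :=
  fun x y => theta_edge k x y || theta_edge k y x.

Definition proper (V C : finType) (adj : rel V) (f : {ffun V -> C}) : bool :=
  [forall x, forall y, adj x y ==> (f x != f y)].

(* P(G,L): number of proper L-colourings; colours drawn from a finite
   colour universe C (any list assignment uses finitely many colours). *)
Definition list_chrom (V C : finType) (adj : rel V) (L : V -> {set C}) : nat :=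
  #|[set f : {ffun V -> C} | [forall w, f w \in L w] && proper adj f]|.

Definition chrom (V : finType) (adj : rel V) (m : nat) : nat :=
  #|[set f : {ffun V -> 'I_m} | proper adj f]|.

(* Main.v *)
Require Import Defs.
From mathcomp Require Import all_boot all_algebra.
From mathcomp Require Import ring zify.
Set Implicit Arguments. Unset Strict Implicit. Unset Printing Implicit Defensive.


Section Gen.
Variable C : finType.

Lemma big_tuple_cons n (F : (n.+1).-tuple C -> nat) :
  \sum_(t : (n.+1).-tuple C) F t =
  \sum_(x : C) \sum_(t : n.-tuple C) F [tuple of x :: t].
Proof.
rewrite pair_big /=.
rewrite (reindex (fun p : C * n.-tuple C => [tuple of p.1 :: p.2])) //.
exists (fun t : (n.+1).-tuple C => (thead t, behead_tuple t)) => [[x t] _|t _] /=.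
  by congr pair; apply/val_inj.
by rewrite [in RHS](tuple_eta t).
Qed.

Lemma big_tuple0 (F : 0.-tuple C -> nat) :
  \sum_(t : 0.-tuple C) F t = F [tuple].
Proof. rewrite (big_pred1 [tuple]) // => t /=; by rewrite [t]tuple0 ; symmetry; apply/eqP. Qed.

Lemma big_ffun_tuple n (F : {ffun 'I_n -> C} -> nat) :
  \sum_(f : {ffun 'I_n -> C}) F f =
  \sum_(t : n.-tuple C) F [ffun i => tnth t i].
Proof.
rewrite (reindex (fun t : n.-tuple C => [ffun i => tnth t i])) //.
exists (fun f : {ffun 'I_n -> C} => [tuple f i | i < n]) => [t _|f _].
  by apply: eq_from_tnth => i; rewrite tnth_mktuple ffunE.
by apply/ffunP => i; rewrite ffunE tnth_mktuple.
Qed.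

Fixpoint inlists (Lf : nat -> {set C}) (s : seq C) : bool :=
  match s with [::] => true | x :: s' => (x \in Lf 0) && inlists (fun i => Lf i.+1) s' end.

Lemma inlistsP (x0 : C) (Lf : nat -> {set C}) (s : seq C) :
  reflect (forall i, i < size s -> nth x0 s i \in Lf i) (inlists Lf s).
Proof.
elim: s Lf => [|x s IH] Lf /=; first by apply: ReflectT.
apply: (iffP andP) => [[h1 /IH h2] [|i] //= hi|h]; first by apply: h2.
split; first by apply: (h 0).
by apply/IH => i hi; apply: (h i.+1).
Qed.

Fixpoint R (b : C) (Lf : nat -> {set C}) (N : nat) (c : C) : nat :=
  match N with
  | 0 => (c != b)
  | N'.+1 => \sum_(c' in Lf 0 | c' != c) R b (fun i => Lf i.+1) N' c'
  end.

Lemma pathcount b N : forall Lf a,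
  \sum_(p : N.-tuple C)
     [&& inlists Lf p, path (fun x y => x != y) a p & last a p != b] = R b Lf N a.
Proof.
elim: N => [|N IH] Lf a; first by rewrite big_tuple0.
rewrite big_tuple_cons /= big_mkcondl /= [RHS]big_mkcond /=.
apply: eq_bigr => x _; rewrite -IH eq_sym.
case: (x \in Lf 0); case: (x != a) => //=; rewrite ?big1 // => t _; by rewrite ?andbF.
Qed.
End Gen.


Section PathBound.
Variable C : finType.

Definition sh (Lf : nat -> {set C}) := fun i => Lf i.+1.
Definition K b (Lf : nat -> {set C}) N := \sum_(c in Lf 0) R b (sh Lf) N c.

Lemma R_K b Lf N c : R b Lf N.+1 c + (c \in Lf 0) * R b (sh Lf) N c = K b Lf N.
Proof.
rewrite /K /=; case: (boolP (c \in Lf 0)) => hc.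
  by rewrite [RHS](bigD1 c) //= mul1n addnC.
rewrite mul0n addn0; apply: eq_bigl => x; case: (boolP (x \in Lf 0)) => //= hx.
by apply/eqP => e; move: hc; rewrite -e hx.
Qed.

Lemma sum_ge1 (A : {set C}) (F : C -> nat) x : x \in A -> F x <= \sum_(c in A) F c.
Proof. by move=> hx; rewrite (bigD1 x) //= leq_addr. Qed.

Lemma sum_neq (A : {set C}) b : \sum_(c in A) (c != b) + (b \in A) = #|A|.
Proof.
case: (boolP (b \in A)) => hb.
  rewrite (big_setD1 b) //= eqxx /= add0n (cardsD1 b A) hb addnC; congr (_ + _).
  rewrite -sum1_card; apply: eq_bigr => c; rewrite in_setD1 => /andP [-> _] //.
rewrite addn0 -sum1_card; apply: eq_bigr => c hc.
by case: eqP => // e; rewrite -e hc in hb.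
Qed.

Lemma sum_inter (L0 L1 : {set C}) (F : C -> nat) :
  \sum_(c in L0) (c \in L1) * F c = \sum_(c in L1 :&: L0) F c.
Proof.
rewrite big_mkcond [RHS]big_mkcond; apply: eq_bigr => c _.
by rewrite in_setI; case: (c \in L0); case: (c \in L1) => //=; rewrite ?mul1n ?mul0n.
Qed.

Lemma K_rec b Lf N :
  K b Lf N.+1 + \sum_(c in Lf 1 :&: Lf 0) R b (sh (sh Lf)) N c =
  #|Lf 0| * K b (sh Lf) N.
Proof.
rewrite -sum_inter /K -big_split /= -sum1_card big_distrl /=.
by apply: eq_bigr => c _; rewrite mul1n; exact: (R_K b (sh Lf) N c).
Qed.

Lemma K_split b Lf N :
  K b (sh Lf) N = \sum_(c in Lf 1 :&: Lf 0) R b (sh (sh Lf)) N c +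
                  \sum_(c in Lf 1 :\: Lf 0) R b (sh (sh Lf)) N c.
Proof. by rewrite /K (@big_setID _ _ _ _ (sh Lf 0) (Lf 0)). Qed.

Lemma K_ge q b N : forall (Lf : nat -> {set C}), (forall i, #|Lf i| = q.+1) -> q ^ N.+1 <= K b Lf N.
Proof.
elim: N => [|N IH] Lf hL.
  have := sum_neq (Lf 0) b; rewrite hL /K /= expn1.
  by case: (b \in Lf 0) => /= h; lia.
have h1 := K_rec b Lf N. have h2 := K_split b Lf N.
have h3 := IH (sh Lf) (fun i => hL i.+1).
rewrite hL in h1.
rewrite expnS.
have : q * q ^ N.+1 <= q * K b (sh Lf) N by rewrite leq_mul2l h3 orbT.
nia.
Qed.

Fixpoint mu (q j : nat) : nat :=
  match j with 0 => q - 1 | j'.+1 => q * q * mu q j' + (q - 1) end.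

Lemma mu_inv q j : 1 <= q -> q.+1 * mu q j + 1 = q ^ (j.*2).+2.
Proof.
move=> hq; elim: j => [|j IH] /=; first by rewrite expnS expn1; nia.
rewrite doubleS (expnS q (j.*2).+3) (expnS q (j.*2).+2) -IH. nia.
Qed.

Lemma path_lb q b j : 1 <= q -> forall (Lf : nat -> {set C}), (forall i, #|Lf i| = q.+1) ->
  forall c, mu q j <= R b Lf (j.*2).+1 c.
Proof.
move=> hq; elim: j => [|j IH] Lf hL c.
  have h1 := R_K b Lf 0 c. have h2 := sum_neq (Lf 0) b.
  rewrite hL /K /= in h1 h2 *.
  case: (c \in Lf 0) h1 => /=; case: (b \in Lf 0) h2; case: (c != b); lia.
rewrite doubleS.
set N := (j.*2).+1.
have h1 := R_K b Lf N.+1 c.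
have h2 := R_K b (sh Lf) N c.
have h3 := K_rec b Lf N. have h4 := K_split b Lf N.
have h5 := K_ge b N (fun i => hL i.+1).
have IH' : forall c, mu q j <= R b (sh (sh Lf)) N c := IH (sh (sh Lf)) (fun i => hL i.+2).
have hinv := mu_inv j hq.
rewrite hL in h3.
have hK2 : q ^ N.+1 = q ^ (j.*2).+2 by [].
rewrite hK2 -hinv in h5.
have h6 : (q-1) * (q.+1 * mu q j + 1) <= (q-1) * K b (sh Lf) N by rewrite leq_mul2l h5 orbT.
have h7 : (q-1) * (q.+1 * mu q j + 1) + mu q j = q*q*mu q j + (q-1) by nia.
have h8 : q.+1 * K b (sh Lf) N = (q-1) * K b (sh Lf) N + 2 * K b (sh Lf) N by nia.
change (q * q * mu q j + (q - 1) <= R b Lf N.+2 c).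
case: (boolP (c \in Lf 0)) => c0.
- rewrite c0 mul1n in h1.
  case: (boolP (c \in sh Lf 0)) => c1.
  + rewrite c1 mul1n in h2.
    have := IH' c. lia.
  + rewrite (negbTE c1) mul0n addn0 in h2.
    have [c' hc'] : exists c', c' \in Lf 1 :\: Lf 0.
      case: (set_0Vmem (Lf 1 :\: Lf 0)) => [e|[c' hc']]; last by exists c'.
      move/eqP: e; rewrite setD_eq0 => sub.
      have : Lf 1 == Lf 0.
        by rewrite eqEcard sub (hL 0) (hL 1) leqnn.
      by move/eqP => e; rewrite /sh e c0 in c1.
    have := sum_ge1 (R b (sh (sh Lf)) N) hc'.
    have := IH' c'. lia.
- rewrite (negbTE c0) mul0n addn0 in h1.
  have [c' hc'] : exists c', c' \in Lf 1.
    case: (set_0Vmem (Lf 1)) => [e|[c' hc']]; last by exists c'.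
    by have := hL 1; rewrite e cards0.
  have := sum_ge1 (R b (sh (sh Lf)) N) hc'.
  have := IH' c'.
  have : \sum_(c in Lf 1) R b (sh (sh Lf)) N c = K b (sh Lf) N by [].
  lia.
Qed.
End PathBound.


Fixpoint sd (q N : nat) : nat * nat :=
  match N with 0 => (0, 1)
  | N'.+1 => (q * (sd q N').2, (sd q N').1 + (q - 1) * (sd q N').2) end.

Lemma sd_odd q j : 1 <= q -> sd q (j.*2).+1 = (mu q j + 1, mu q j).
Proof.
move=> hq; elim: j => [|j IH]; first by rewrite /=; congr pair; lia.
rewrite doubleS.
change (sd q (j.*2).+3) with
  (q * (sd q (j.*2).+2).2, (sd q (j.*2).+2).1 + (q - 1) * (sd q (j.*2).+2).2).
change (sd q (j.*2).+2) with
  (q * (sd q (j.*2).+1).2, (sd q (j.*2).+1).1 + (q - 1) * (sd q (j.*2).+1).2).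
rewrite IH /=; congr pair; nia.
Qed.

Section Full.
Variable C : finType.
Variable q : nat.
Hypothesis hC : #|C| = q.+1.

Lemma sum_ite (u : C) x y :
  \sum_(v in [set: C]) (if v == u then x else y) = x + q * y.
Proof.
rewrite (bigD1 u) ?in_setT //= eqxx; congr (_ + _).
rewrite (eq_bigr (fun _ => y)) => [|v /andP [_ /negbTE ->]] //.
rewrite sum_nat_const; congr (_ * _).
have h := cardsD1 u [set: C].
rewrite cardsT hC in_setT in h.
have -> : q = #|[set: C] :\ u| by lia.
apply: eq_card => v. by rewrite /= !inE andbT unfold_in /= in_setT.
Qed.

Lemma R_full b N c :
  R b (fun _ => [set: C]) N c = if c == b then (sd q N).1 else (sd q N).2.
Proof.
elim: N c => [|N IH] c /=; first by case: (c == b).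
rewrite (eq_bigr (fun c' => if c' == b then (sd q N).1 else (sd q N).2)) => [|c' _]; last exact: IH.
have h := sum_ite b (sd q N).1 (sd q N).2.
rewrite (bigD1 c) ?in_setT //= in h.
have -> : \sum_(i in [set: C] | i != c) (if i == b then (sd q N).1 else (sd q N).2) =
  \sum_(i | (i \in [set: C]) && (i != c)) (if i == b then (sd q N).1 else (sd q N).2) by [].
case: (boolP (c == b)) => cb; [rewrite cb in h * | rewrite (negbTE cb) in h *]; first by lia.
have hq : 1 <= q.
  have : 1 < #|C|.
    by rewrite (cardD1 c) (cardD1 b) !inE eq_sym cb.
  lia.
have : q * (sd q N).2 = (q - 1) * (sd q N).2 + (sd q N).2 by nia.
lia.
Qed.
End Full.


Section Theta.
Variable C : finType.

Definition Tc (L : nat -> {set C}) N :=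
  \sum_(u in L 0) \sum_(v in L 1)
     #|L 2 :\ u :\ v| * #|L 3 :\ u :\ v| * R v (fun i => L i.+4) N u.

Lemma card_uv (L2 : {set C}) u v :
  #|L2 :\ u :\ v| + (u \in L2) + (v \in L2) = #|L2| + ((v == u) && (v \in L2)).
Proof.
rewrite (cardsD1 u L2) (cardsD1 v (L2 :\ u)) in_setD1.
case: (v =P u) => [->|_] /=; case: (u \in L2); case: (v \in L2) => /=; lia.
Qed.

Lemma sum_mem (A B : {set C}) : \sum_(c in A) (c \in B) = #|A :&: B|.
Proof.
rewrite -sum1_card big_mkcond [RHS]big_mkcond; apply: eq_bigr => c _.
by rewrite in_setI; case: (c \in A); case: (c \in B).
Qed.

Lemma sum_eq (L1 L2 : {set C}) u :
  \sum_(v in L1) ((v == u) && (v \in L2)) = (u \in L1) && (u \in L2).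
Proof.
case: (boolP (u \in L1)) => hu.
  rewrite (bigD1 u) //= eqxx /= big1 ?addn0 // => v /andP [_ /negbTE ->] //.
by rewrite big1 // => v hv; case: eqP => // e; rewrite -e hv in hu.
Qed.

Lemma sumA (L0 L1 L2 : {set C}) m :
  #|L0| = m -> #|L1| = m -> #|L2| = m ->
  \sum_(u in L0) \sum_(v in L1) #|L2 :\ u :\ v| + m * #|L0 :&: L2| + m * #|L1 :&: L2|
  = m * (m * m) + #|L0 :&: (L1 :&: L2)|.
Proof.
move=> h0 h1 h2.
have e : \sum_(u in L0) \sum_(v in L1) (#|L2 :\ u :\ v| + (u \in L2) + (v \in L2)) =
         \sum_(u in L0) \sum_(v in L1) (m + ((v == u) && (v \in L2))).
  by apply: eq_bigr => u _; apply: eq_bigr => v _; rewrite card_uv h2.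
have s2 : \sum_(u in L0) \sum_(v in L1) (u \in L2 : nat) = m * #|L0 :&: L2|.
  rewrite -sum_mem big_distrr /=; apply: eq_bigr => u _.
  by rewrite sum_nat_const h1 mulnC.
have s3 : \sum_(u in L0) \sum_(v in L1) (v \in L2 : nat) = m * #|L1 :&: L2|.
  rewrite (eq_bigr (fun _ => #|L1 :&: L2|)) => [|u _]; last by rewrite sum_mem.
  by rewrite sum_nat_const h0.
have s4 : \sum_(u in L0) \sum_(v in L1) m = m * (m * m).
  rewrite (eq_bigr (fun _ => m * m)) => [|u _]; last by rewrite sum_nat_const h1.
  by rewrite sum_nat_const h0.
have s5 : \sum_(u in L0) \sum_(v in L1) ((v == u) && (v \in L2) : nat) =
          #|L0 :&: (L1 :&: L2)|.
  rewrite -sum_mem; apply: eq_bigr => u _; by rewrite sum_eq in_setI.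
rewrite -s2 -s3 -s4 -s5 -!big_split; apply: eq_bigr => u _.
rewrite -!big_split; apply: eq_bigr => v _ /=.
by rewrite card_uv h2.
Qed.

Lemma SA_lb (L0 L1 L2 : {set C}) q :
  #|L0| = q.+1 -> #|L1| = q.+1 -> #|L2| = q.+1 -> L0 != L1 ->
  q^3 + q^2 + q <= \sum_(u in L0) \sum_(v in L1) #|L2 :\ u :\ v|.
Proof.
move=> h0 h1 h2 ne.
have e := sumA h0 h1 h2.
set SA := \sum_(u in L0) _ in e *.
set X := #|L0 :&: L2| in e. set Y := #|L1 :&: L2| in e.
set Z := #|L0 :&: (L1 :&: L2)| in e.
have hX : X <= q.+1 by rewrite -h2 /X subset_leq_card // subsetIr.
have hY : Y <= q.+1 by rewrite -h2 /Y subset_leq_card // subsetIr.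
have hZ : X + Y <= Z + q.+1.
  have := cardsUI (L0 :&: L2) (L1 :&: L2).
  have -> : (L0 :&: L2) :&: (L1 :&: L2) = L0 :&: (L1 :&: L2).
    by apply/setP => x; rewrite !inE; case: (x \in L0); case: (x \in L1); case: (x \in L2).
  have : #|(L0 :&: L2) :|: (L1 :&: L2)| <= q.+1.
    by rewrite -h2 subset_leq_card // subUset !subsetIr.
  rewrite /X /Y /Z; lia.
have hXY : X + Y <= (q.+1).*2.-1.
  have : ~ (X = q.+1 /\ Y = q.+1).
    move=> [eX eY].
    have s0 : L0 \subset L2.
      have : L0 :&: L2 == L0.
        by rewrite eqEcard subsetIl h0 -eX /X leqnn.
      by move/eqP => <-; rewrite subsetIr.
    have s1 : L1 \subset L2.
      have : L1 :&: L2 == L1.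
        by rewrite eqEcard subsetIl h1 -eY /Y leqnn.
      by move/eqP => <-; rewrite subsetIr.
    have e0 : L0 == L2.
      by rewrite eqEcard s0 h0 h2 leqnn.
    have e1 : L1 == L2.
      by rewrite eqEcard s1 h1 h2 leqnn.
    by move: ne; rewrite (eqP e0) (eqP e1) eqxx.
  lia.
set S := X + Y in hZ hXY.
have i1 : q.+1 * X + q.+1 * Y = q * S + S by rewrite /S; ring.
have i2 : q * S <= q * (q.*2.+1) by rewrite leq_mul2l; apply/orP; right; lia.
have i3 : q.+1 * (q.+1 * q.+1) = q^3 + 3 * q^2 + 3 * q + 1 by ring.
have i4 : q * (q.*2.+1) = 2 * q^2 + q by rewrite -addnn; ring.
lia.
Qed.
Lemma Tc_full q N : #|C| = q.+1 ->
  Tc (fun _ => [set: C]) N =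
  q.+1 * (q * q * (sd q N).1 + q * ((q - 1) * (q - 1) * (sd q N).2)).
Proof.
move=> hC; rewrite /Tc.
rewrite (eq_bigr (fun _ => q * q * (sd q N).1 + q * ((q - 1) * (q - 1) * (sd q N).2)));
  last first.
  move=> u _; rewrite -(sum_ite hC u).
  apply: eq_bigr => v _; rewrite (R_full hC).
  have := card_uv [set: C] u v; rewrite !in_setT cardsT hC.
  case: (v =P u) => [->|ne]; rewrite ?eqxx /=.
    by move=> h; have -> : #|[set: C] :\ u :\ u| = q by lia.
  have -> : (u == v) = false by apply/eqP => e; apply: ne.
  by move=> h; have -> : #|[set: C] :\ u :\ v| = q - 1 by lia.
by rewrite sum_nat_const cardsT hC.
Qed.

Lemma Tc_lb q j (L : nat -> {set C}) : 1 <= q -> (forall i, #|L i| = q.+1) ->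
  mu q j * (\sum_(u in L 0) \sum_(v in L 1) #|L 2 :\ u :\ v| * #|L 3 :\ u :\ v|)
  <= Tc L (j.*2).+1.
Proof.
move=> hq hL; rewrite /Tc big_distrr /=; apply: leq_sum => u _.
rewrite big_distrr /=; apply: leq_sum => v _.
rewrite mulnC leq_mul2l; apply/orP; right.
exact: (path_lb v j hq (fun i => hL i.+4)).
Qed.

Lemma P_lb q (L : nat -> {set C}) : (forall i, #|L i| = q.+1) ->
  (q - 1) * (\sum_(u in L 0) \sum_(v in L 1) #|L 2 :\ u :\ v| +
             \sum_(u in L 0) \sum_(v in L 1) #|L 3 :\ u :\ v|)
  <= \sum_(u in L 0) \sum_(v in L 1) #|L 2 :\ u :\ v| * #|L 3 :\ u :\ v|
     + q.+1 * q.+1 * ((q - 1) * (q - 1)).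
Proof.
move=> hL.
have cst : \sum_(u in L 0) \sum_(v in L 1) ((q - 1) * (q - 1)) = q.+1 * q.+1 * ((q - 1) * (q - 1)).
  rewrite (eq_bigr (fun _ => q.+1 * ((q - 1) * (q - 1)))) => [|u _]; last by rewrite sum_nat_const hL.
  by rewrite sum_nat_const hL mulnA.
have pw : forall u v, (q - 1) * #|L 2 :\ u :\ v| + (q - 1) * #|L 3 :\ u :\ v| <=
     #|L 2 :\ u :\ v| * #|L 3 :\ u :\ v| + (q - 1) * (q - 1).
  move=> u v.
  have a2 := card_uv (L 2) u v. have a3 := card_uv (L 3) u v.
  rewrite !hL in a2 a3.
  have ha : q - 1 <= #|L 2 :\ u :\ v|.
    move: a2; case: (u \in L 2); case: (v \in L 2); case: (_ && _) => /=; lia.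
  have hb : q - 1 <= #|L 3 :\ u :\ v|.
    move: a3; case: (u \in L 3); case: (v \in L 3); case: (_ && _) => /=; lia.
  nia.
have : \sum_(u in L 0) \sum_(v in L 1)
    ((q - 1) * #|L 2 :\ u :\ v| + (q - 1) * #|L 3 :\ u :\ v|) <=
  \sum_(u in L 0) \sum_(v in L 1)
    (#|L 2 :\ u :\ v| * #|L 3 :\ u :\ v| + (q - 1) * (q - 1)).
  by apply: leq_sum => u _; apply: leq_sum => v _; apply: pw.
have -> : \sum_(u in L 0) \sum_(v in L 1)
    ((q - 1) * #|L 2 :\ u :\ v| + (q - 1) * #|L 3 :\ u :\ v|) =
  (q - 1) * (\sum_(u in L 0) \sum_(v in L 1) #|L 2 :\ u :\ v| +
             \sum_(u in L 0) \sum_(v in L 1) #|L 3 :\ u :\ v|).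
  rewrite mulnDr !big_distrr -big_split; apply: eq_bigr => u _ /=.
  by rewrite !big_distrr -big_split.
have -> : \sum_(u in L 0) \sum_(v in L 1)
    (#|L 2 :\ u :\ v| * #|L 3 :\ u :\ v| + (q - 1) * (q - 1)) =
  \sum_(u in L 0) \sum_(v in L 1) #|L 2 :\ u :\ v| * #|L 3 :\ u :\ v| +
  \sum_(u in L 0) \sum_(v in L 1) ((q - 1) * (q - 1)).
  rewrite -big_split; apply: eq_bigr => u _ /=.
  by rewrite -big_split.
by rewrite cst.
Qed.
End Theta.


Section Decomp.
Variable C : finType.
Variable k' : nat.
Local Notation k := k'.+2.
Local Notation N := ((k'.+1).*2).+1.

Lemma edge_cases (a b : nat) : theta_edge k a b ->
  [\/ (a = 0 /\ (b = 2 \/ b = 3 \/ b = 4)), (b = 1 /\ (a = 2 \/ a = 3 \/ a = N.+3)) |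
      exists i, a = i.+4 /\ b = (i.+4).+1 /\ i.+1 < N].
Proof.
rewrite /theta_edge.
case/orP => [/andP [/eqP -> /eqP ->]|]; first by apply: Or31; split => //; left.
case/orP => [/andP [/eqP -> /eqP ->]|]; first by apply: Or32; split => //; left.
case/orP => [/andP [/eqP -> /eqP ->]|]; first by apply: Or31; split => //; right; left.
case/orP => [/andP [/eqP -> /eqP ->]|]; first by apply: Or32; split => //; right; left.
case/orP => [/andP [/eqP -> /eqP ->]|]; first by apply: Or31; split => //; right; right.
case/orP => [/and3P [h1 /eqP h2 h3]|/andP [/eqP -> /eqP ->]]; last first.
  by apply: Or32; split => //; right; right.
apply: Or33; exists (a - 4).
move: h3; rewrite h2 -!addnn => h3.
split; first lia. split; lia.
Qed.

Variable L : 'I_(k.*2).+3 -> {set C}.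
Local Notation L' := (fun i => L (inord i)).

Lemma transl (u v x2 x3 : C) (p : N.-tuple C) :
  let f := [ffun i : 'I_(k.*2).+3 => nth u [:: u, v, x2, x3 & p] i] in
  ([forall w, f w \in L w] && Defs.proper (@theta_adj k) f) =
  [&& u \in L' 0, v \in L' 1, x2 \in L' 2 :\ u :\ v, x3 \in L' 3 :\ u :\ v &
      [&& inlists (fun i => L' i.+4) p, path (fun x y => x != y) u p & last u p != v]].
Proof.
move=> f.
have fE : forall w : 'I_(k.*2).+3, f w = nth u [:: u, v, x2, x3 & p] w by move=> w; rewrite ffunE.
have sz : size p = N by rewrite size_tuple.
apply/idP/idP.
- case/andP => /forallP hL /forallP hP.
  have hE : forall a b, a < (k.*2).+3 -> b < (k.*2).+3 -> theta_edge k a b ->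
      nth u [:: u, v, x2, x3 & p] a != nth u [:: u, v, x2, x3 & p] b.
    move=> a b ha hb he.
    have := hP (inord a) => /forallP /(_ (inord b)) /implyP.
    rewrite !fE !inordK //; apply.
    by rewrite /theta_adj !inordK // he.
  have hl : forall w, w < (k.*2).+3 -> nth u [:: u, v, x2, x3 & p] w \in L' w.
    by move=> w hw; have := hL (inord w); rewrite fE inordK.
  rewrite !inE.
  rewrite (hl 0) // (hl 1) // (hl 2) // (hl 3) //.
  have n2u : x2 != u by rewrite eq_sym; apply: (hE 0 2).
  have n2v : x2 != v by apply: (hE 2 1).
  have n3u : x3 != u by rewrite eq_sym; apply: (hE 0 3).
  have n3v : x3 != v by apply: (hE 3 1).
  rewrite n2u n2v n3u n3v /=.
  apply/and3P; split.
  + apply/(inlistsP u) => i hi; apply: (hl i.+4); rewrite sz in hi; lia.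
  + apply/(pathP u) => i; rewrite sz => hi.
    case: i hi => [|i] hi.
      by apply: (hE 0 4).
    apply: (hE i.+4 (i.+4).+1) => //; try lia.
    have ht : [&& 4 <= i.+4, (i.+4).+1 == (i.+4).+1 & (i.+4).+1 <= (k.*2).+2].
      rewrite eqxx /=; move: hi; rewrite -!addnn; lia.
    by rewrite /theta_edge ht !orbT.
  + rewrite -nth_last sz /=.
    have ht : (N.+3 == k.*2.+2) && (1 == 1).
      by apply/andP; split; apply/eqP.
    apply: (hE N.+3 1) => //.
- case/and5P => h0 h1 h2 h3 /and3P [hl hpath hlast].
  move: h2 h3; rewrite !inE => /and3P [n2v n2u h2] /and3P [n3v n3u h3].
  apply/andP; split.
  + apply/forallP => w; rewrite fE -[w in L w]inord_val.
    case: w => [[|[|[|[|w]]]] hw] //=.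
    by move/(inlistsP u): hl => /(_ w); rewrite sz; apply; lia.
  + have hE : forall a b, a < (k.*2).+3 -> b < (k.*2).+3 -> theta_edge k a b ->
        nth u [:: u, v, x2, x3 & p] a != nth u [:: u, v, x2, x3 & p] b.
      move=> a b ha hb /edge_cases [[-> [->|[->|->]]]|[-> [->|[->|->]]]|[i [-> [-> hi]]]] /=.
      * by rewrite eq_sym.
      * by rewrite eq_sym.
      * by move/(pathP u): hpath => /(_ 0); rewrite sz; apply.
      * by [].
      * by [].
      * by move: hlast; rewrite -nth_last sz.
      * by move/(pathP u): hpath => /(_ i.+1); rewrite sz; apply.
    apply/forallP => x; apply/forallP => y; apply/implyP.
    rewrite /theta_adj => /orP [he|he]; rewrite !fE.
      exact: hE.
    by rewrite eq_sym; apply: hE.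
Qed.
Lemma sum_memT (S : {set C}) : \sum_(x : C) (x \in S) = #|S|.
Proof. by rewrite -sum1_card [RHS]big_mkcond; apply: eq_bigr => x _; case: (x \in S). Qed.

Lemma decomp : list_chrom (@theta_adj k) L = Tc L' N.
Proof.
rewrite /list_chrom cardsE -sum1_card big_mkcond /=.
rewrite (eq_bigr (fun f : {ffun _ -> C} => ([forall w, f w \in L w] && Defs.proper (@theta_adj k) f) : nat));
  last by move=> f _; rewrite unfold_in /=; case: (_ && _).
rewrite big_ffun_tuple.
rewrite big_tuple_cons /Tc.
rewrite [RHS]big_mkcond; apply: eq_bigr => u _.
rewrite big_tuple_cons.
have inner : forall v, \sum_(t : (N.+2).-tuple C)
     ([forall w, [ffun i => tnth [tuple of u :: [tuple of v :: t]] i] w \in L w] &&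
      Defs.proper (@theta_adj k) [ffun i => tnth [tuple of u :: [tuple of v :: t]] i]) =
   (u \in L' 0) * (v \in L' 1) * (#|L' 2 :\ u :\ v| * #|L' 3 :\ u :\ v| * R v (fun i => L' i.+4) N u).
  move=> v.
  rewrite big_tuple_cons.
  rewrite (eq_bigr (fun x2 => (u \in L' 0) * (v \in L' 1) * ((x2 \in L' 2 :\ u :\ v) *
        (#|L' 3 :\ u :\ v| * R v (fun i => L' i.+4) N u)))); last first.
    move=> x2 _; rewrite big_tuple_cons.
    rewrite (eq_bigr (fun x3 => (u \in L' 0) * (v \in L' 1) * ((x2 \in L' 2 :\ u :\ v) *
        ((x3 \in L' 3 :\ u :\ v) * R v (fun i => L' i.+4) N u)))); last first.
      move=> x3 _.
      rewrite -(pathcount v N (fun i => L' i.+4) u) !big_distrr /=.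
      apply: eq_bigr => p _.
      have -> : [ffun i => tnth [tuple of u :: [tuple of v :: [tuple of x2 :: [tuple of x3 :: p]]]] i]
          = [ffun i : 'I_(k.*2).+3 => nth u [:: u, v, x2, x3 & p] i].
        by apply/ffunP => i; rewrite !ffunE (tnth_nth u).
      rewrite transl.
      by rewrite !mulnb !andbA.
    by rewrite -big_distrr -big_distrr -big_distrl /= sum_memT.
  by rewrite -big_distrr /= -big_distrl /= sum_memT !mulnA.
rewrite (eq_bigr _ (fun v _ => inner v)).
case: (u \in L' 0); last by rewrite big1 // => v _; rewrite mul0n.
rewrite [RHS]big_mkcond; apply: eq_bigr => v _.
by case: (v \in L' 1); rewrite /= ?mul1n ?mul0n.
Qed.
End Decomp.


Lemma arith Q mu P SA SB :
  (Q+3)*(Q+3) <= mu ->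
  (Q+3)^3+(Q+3)^2+(Q+3) <= SA -> (Q+3)^3+(Q+3)^2+(Q+3) <= SB ->
  (Q+2)*(SA+SB) <= P + (Q+4)*(Q+4)*((Q+2)*(Q+2)) ->
  (Q+4)*((Q+3)*(Q+3)*(mu+1) + (Q+3)*((Q+2)*(Q+2)*mu)) <= mu*P.
Proof.
move=> hmu hA hB hP.
set T := (Q+3)^3+(Q+3)^2+(Q+3) in hA hB.
set P0 := Q^4+12*Q^3+56*Q^2+118*Q+92.
set E := Q^4+12*Q^3+54*Q^2+109*Q+84.
set W := 2*Q^2+9*Q+8.
have a : (Q+2)*(2*T) <= (Q+2)*(SA+SB) by rewrite leq_mul2l; apply/orP; right; lia.
have b : (Q+2)*(2*T) = P0 + (Q+4)*(Q+4)*((Q+2)*(Q+2)) by rewrite /T /P0; ring.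
have hP0 : P0 <= P by lia.
have c : mu*P0 <= mu*P by rewrite leq_mul2l hP0 orbT.
have d : mu*P0 = mu*E + mu*W by rewrite /P0 /E /W; ring.
have g : (Q+4)*((Q+3)*(Q+3)*(mu+1) + (Q+3)*((Q+2)*(Q+2)*mu)) = mu*E + (Q+4)*((Q+3)*(Q+3)) by rewrite /E; ring.
have e : (Q+3)*(Q+3)*W <= mu*W by rewrite leq_mul2r hmu orbT.
have f : (Q+4)*((Q+3)*(Q+3)) <= (Q+3)*(Q+3)*W.
  rewrite mulnC leq_mul2l; apply/orP; right; rewrite /W; lia.
lia.
Qed.

Lemma arith' q mu P SA SB : 3 <= q ->
  q * q <= mu -> q^3+q^2+q <= SA -> q^3+q^2+q <= SB ->
  (q - 1) * (SA + SB) <= P + q.+1 * q.+1 * ((q - 1) * (q - 1)) ->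
  q.+1 * (q * q * (mu + 1) + q * ((q - 1) * (q - 1) * mu)) <= mu * P.
Proof.
move=> h3; have [Q eQ] : exists Q, q = Q + 3 by exists (q - 3); lia.
subst q.
have -> : Q + 3 - 1 = Q + 2 by lia.
have -> : (Q + 3).+1 = Q + 4 by lia.
exact: arith.
Qed.

Lemma mu_pos q j : 2 <= q -> 1 <= mu q j.
Proof. move=> hq; elim: j => [|j IH] /=; lia. Qed.

Lemma chrom_eq (V : finType) (adj : rel V) m :
  chrom adj m = list_chrom adj (fun _ => [set: 'I_m]).
Proof.
rewrite /chrom /list_chrom; apply: eq_card => f; rewrite !inE.
by have -> : [forall w, f w \in [set: 'I_m]] by apply/forallP => w; rewrite in_setT.
Qed.

Theorem lemma24 (k m : nat) (C : finType)
    (L : 'I_(k.*2).+3 -> {set C}) :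
  2 <= k -> 4 <= m ->
  (forall w, #|L w| = m) ->
  L (inord 0) != L (inord 1) ->
  chrom (@theta_adj k) m <= list_chrom (@theta_adj k) L.
Proof.
case: k L => [|[|k']] L // _ hm hL hne.
case: m hm hL => [|q] // hm hL.
have hq : 3 <= q by lia.
rewrite chrom_eq !decomp.
rewrite (Tc_full _ (card_ord q.+1)) sd_odd /=; last by lia.
have hL' : forall i, #|L (inord i)| = q.+1 by move=> i; apply: hL.
have h1 := @Tc_lb C q k'.+1 (fun i => L (inord i)) (ltnW (ltnW hq)) hL'.
have h2 := @P_lb C q (fun i => L (inord i)) hL'.
have h3 := SA_lb (hL' 0) (hL' 1) (hL' 2) hne.
have h4 := SA_lb (hL' 0) (hL' 1) (hL' 3) hne.
have hmu : q * q <= mu q k'.+1.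
  have := mu_pos k' (ltnW hq); rewrite /=.
  move=> hp; have : q * q * 1 <= q * q * mu q k' by rewrite leq_mul2l hp orbT.
  lia.
apply: leq_trans h1.
exact: (arith' hq hmu h3 h4 h2).
Qed.
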